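(* Let $\Lambda$ be a germ at the origin of $\mathbb{K}^n$ ($\mathbb{K}=\mathbb{R}$ or $\mathbb{C}$; smooth, analytic or formal) of a Nambu structure of degree $q$, let $\Omega$ be a volume form, let $\omega=i_\Lambda\Omega$, and let $u$ be an invertible (nowhere vanishing) function germ. Then $DH(\mathcal{F}_\Lambda)\cong DH(\mathcal{F}_\omega)$ and $DH(\mathcal{F}_\Lambda)\cong DH(\mathcal{F}_{u\Lambda})$.
   Context: A differential $p$-form $\omega$ is integrable if for every $(p-1)$-vector field $A$: $\omega\wedge i_A\omega=0$ and $d\omega\wedge i_A\omega=0$. A $q$-vector field $\Lambda$ is a Nambu structure if $i_\Lambda\Omega$ is an integrable $(n-q)$-form for a volume form $\Omega$. A $p$-form $\eta$ is an infinitesimal deformation of an integrable $p$-form $\omega$ if for all $(p-1)$-vector fields $A$: $i_A\omega\wedge\eta+i_A\eta\wedge\omega=0$ and $i_A\omega\wedge d\eta+i_A\eta\wedge d\omega=0$; the set of these is $\mathcal{Z}(\omega)$. $\mathcal{Z}(\Lambda)$ is the set of $q$-vector fields $\Pi$ with $i_\Pi\Omega\in\mathcal{Z}(i_\Lambda\Omega)$. The trivial deformations of the foliation are $\mathcal{B}(\mathcal{F}_\Lambda)=\{\mathcal{L}_X\Lambda+f\Lambda\}$ and $\mathcal{B}(\mathcal{F}_\omega)=\{\mathcal{L}_X\omega+f\omega\}$, where $X$ ranges over vector field germs and $f$ over function germs. The deformation cohomologies are $DH(\mathcal{F}_\Lambda)=\mathcal{Z}(\Lambda)/\mathcal{B}(\mathcal{F}_\Lambda)$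 and $DH(\mathcal{F}_\omega)=\mathcal{Z}(\omega)/\mathcal{B}(\mathcal{F}_\omega)$. *)

(* Defs.v *)
(* Germs of multivector fields / differential forms on K^n,
   in coordinates: an element of the exterior algebra is the family of its
   coefficients indexed by subsets I of {0,..,n-1} (basis d_I = d_{i1}/\..., i1<...<ik,
   resp. dx_I).  Function germs form a commutative K-algebra A with the n
   commuting coordinate partial derivatives D i. *)
From HB Require Import structures.
From mathcomp Require Import all_boot all_order all_algebra.
Set Implicit Arguments. Unset Strict Implicit. Unset Printing Implicit Defensive.
Import Order.TTheory GRing.Theory Num.Theory.
Local Open Scope ring_scope.

Section Ext.
Variables (K : numFieldType) (A : comUnitAlgType K) (n : nat).

Notation ext := {ffun {set 'I_n} -> A}.

Definition coord_derivations (D : 'I_n -> A -> A) : Prop :=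
  [/\ forall i (k : K) x y, D i (k *: x + y) = k *: D i x + D i y,
      forall i x y, D i (x * y) = D i x * y + x * D i y
    & forall i j x, D i (D j x) = D j (D i x)].

Definition homog (k : nat) (a : ext) : Prop := forall I : {set 'I_n}, #|I| != k -> a I = 0.

(* "A is a (p-1)-vector field" (there are none when p = 0) *)
Definition pm1vec (p : nat) (a : ext) : Prop := (0 < p)%N /\ homog p.-1 a.

(* sign with e_I /\ e_J = esign I J e_(I u J) for disjoint I, J *)
Definition esign (I J : {set 'I_n}) : A :=
  (-1) ^+ #|[set p : 'I_n * 'I_n | [&& p.1 \in I, p.2 \in J & (p.2 < p.1)%N]]|.

Definition ebase (I : {set 'I_n}) : ext := [ffun J => (J == I)%:R].

Definition mscale (f : A) (a : ext) : ext := [ffun I => f * a I].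

Definition wedge (a b : ext) : ext :=
  [ffun L : {set 'I_n} => \sum_(I : {set 'I_n}) \sum_(J : {set 'I_n} | [disjoint I & J] && (I :|: J == L))
                esign I J * a I * b J].

(* interior product i_P w of a multivector P into a form w:
   i_(d_I) (dx_I /\ dx_L) = dx_L *)
Definition iprod (P w : ext) : ext :=
  [ffun L : {set 'I_n} => \sum_(I : {set 'I_n} | [disjoint I & L]) esign I L * P I * w (I :|: L)].

Section WithD.
Variable D : 'I_n -> A -> A.

Definition dext (w : ext) : ext :=
  [ffun L : {set 'I_n} => \sum_(i in L) esign [set i] (L :\ i) * D i (w (L :\ i))].

(* Lie derivative of a form along a vector field X (Cartan formula) *)
Definition lie_form (X w : ext) : ext := iprod X (dext w) + dext (iprod X w).

(* Lie derivative (Schouten bracket [X, P]) of a multivector field P along X: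
   [X, f d_I] = X(f) d_I + f [X, d_I],  [X, d_i] = - sum_j D_i(X_j) d_j *)
Definition lie_mv (X P : ext) : ext :=
  [ffun L : {set 'I_n} => \sum_(j : 'I_n) X [set j] * D j (P L)]
  - \sum_(I : {set 'I_n}) \sum_(i in I) \sum_(j : 'I_n)
        mscale (P I * D i (X [set j]) * esign [set i] (I :\ i))
               (wedge (ebase [set j]) (ebase (I :\ i))).

Definition volume_form (Om : ext) : Prop := homog n Om /\ Om setT \is a GRing.unit.

Definition integrable (p : nat) (w : ext) : Prop :=
  homog p w /\
  forall P : ext, pm1vec p P ->
    wedge w (iprod P w) = 0 /\ wedge (dext w) (iprod P w) = 0.

Definition nambu (q : nat) (Lam : ext) : Prop :=
  homog q Lam /\ exists Om, volume_form Om /\ integrable (n - q) (iprod Lam Om).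

Definition Zform (p : nat) (w eta : ext) : Prop :=
  homog p eta /\
  forall P : ext, pm1vec p P ->
    wedge (iprod P w) eta + wedge (iprod P eta) w = 0 /\
    wedge (iprod P w) (dext eta) + wedge (iprod P eta) (dext w) = 0.

Definition Zmv (q : nat) (Om Lam Pi : ext) : Prop :=
  homog q Pi /\ Zform (n - q) (iprod Lam Om) (iprod Pi Om).

Definition Bmv (Lam Pi : ext) : Prop :=
  exists X f, homog 1 X /\ Pi = lie_mv X Lam + mscale f Lam.
Definition Bform (w eta : ext) : Prop :=
  exists X f, homog 1 X /\ eta = lie_form X w + mscale f w.
End WithD.
End Ext.

(* Z1/B1 ~= Z2/B2 as K-vector spaces: a K-linear map sending Z1 into Z2
   inducing a bijection Z1/B1 -> Z2/B2. *)
Definition subquot_iso (K : numFieldType) (V W : lmodType K)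
    (Z1 B1 : V -> Prop) (Z2 B2 : W -> Prop) : Prop :=
  exists f : V -> W,
    [/\ forall (k : K) x y, f (k *: x + y) = k *: f x + f y,
        forall x, Z1 x -> Z2 (f x),
        forall y, Z2 y -> exists2 x, Z1 x & B2 (f x - y)
      & forall x, Z1 x -> (B2 (f x) <-> B1 x)].

(* Main.v *)
Require Import Defs.
From HB Require Import structures.
From mathcomp Require Import all_boot all_order all_algebra.
From mathcomp Require Import zify ring.
Import GRing.Theory.
Set Implicit Arguments. Unset Strict Implicit. Unset Printing Implicit Defensive.
Local Open Scope ring_scope.


Section Signs.
Variables (K : numFieldType) (A : comUnitAlgType K) (n : nat).
Implicit Types (I J M L B C : {set 'I_n}).

Definition cnt I J := #|[set p : 'I_n * 'I_n | [&& p.1 \in I, p.2 \in J & (p.2 < p.1)%N]]|.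

Lemma esignE I J : esign A I J = (-1) ^+ cnt I J.
Proof. by []. Qed.

Lemma m1sq : (-1 : A) ^+ 2 = 1.
Proof. by rewrite expr2 mulrNN mulr1. Qed.

Lemma sgn_mod2 (x y : nat) : (x %% 2 = y %% 2)%N -> (-1 : A) ^+ x = (-1) ^+ y.
Proof.
move=> h; rewrite (divn_eq x 2) (divn_eq y 2) h !exprD.
by rewrite ![(_ %/ 2 * 2)%N]mulnC !exprM m1sq !expr1n.
Qed.

Lemma cntUl I J C : [disjoint I & J] -> cnt (I :|: J) C = (cnt I C + cnt J C)%N.
Proof.
move=> dIJ; rewrite /cnt -cardsUI.
have -> : [set p : 'I_n * 'I_n | [&& p.1 \in I, p.2 \in C & (p.2 < p.1)%N]] :&:
          [set p : 'I_n * 'I_n | [&& p.1 \in J, p.2 \in C & (p.2 < p.1)%N]] = set0.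
  apply/setP=> p; rewrite !inE.
  by case: (boolP (p.1 \in I)) => // /(disjointFr dIJ) ->; rewrite andbF.
rewrite cards0 addn0; apply: eq_card => p; rewrite !inE.
by case: (_ \in I); case: (_ \in J); rewrite /= ?orbb ?orbF.
Qed.

Lemma cntUr I J C : [disjoint J & C] -> cnt I (J :|: C) = (cnt I J + cnt I C)%N.
Proof.
move=> dIJ; rewrite /cnt -cardsUI.
have -> : [set p : 'I_n * 'I_n | [&& p.1 \in I, p.2 \in J & (p.2 < p.1)%N]] :&:
          [set p : 'I_n * 'I_n | [&& p.1 \in I, p.2 \in C & (p.2 < p.1)%N]] = set0.
  apply/setP=> p; rewrite !inE.
  by case: (boolP (p.2 \in J)) => [/(disjointFr dIJ) -> | _]; rewrite !andbF.
rewrite cards0 addn0; apply: eq_card => p; rewrite !inE.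
by case: (_ \in J); case: (_ \in C); rewrite /= ?andbF ?andbT ?orbF ?orbb ?andbb.
Qed.

Lemma cntswap I J : [disjoint I & J] -> (cnt I J + cnt J I = #|I| * #|J|)%N.
Proof.
move=> dIJ; rewrite /cnt mulnC -cardsX.
rewrite -(card_preimset _ (can_inj (@swap_pairK _ _))) -cardsUI.
rewrite (_ : _ :&: _ = set0); last first.
  apply/setP=> p; rewrite !inE /=.
  by case: (ltngtP p.1 p.2); rewrite ?andbF.
rewrite cards0 addn0; apply: eq_card => -[a b]; rewrite !inE /=.
case: (boolP (a \in J)) => aJ /=; rewrite ?andbF //.
case: (boolP (b \in I)) => bI /=; rewrite ?andbF //.
have : a != b by apply: contraTneq aJ => ->; rewrite (disjointFr dIJ bI).
by rewrite neq_ltn.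
Qed.

Lemma cnt11 (i j : 'I_n) : i != j -> (cnt [set i] [set j] + cnt [set j] [set i] = 1)%N.
Proof. by move=> ij; rewrite cntswap ?cards1 // disjoints1 in_set1. Qed.

Lemma cnt0l J : cnt set0 J = 0%N.
Proof. by apply/eqP; rewrite cards_eq0; apply/eqP/setP=> p; rewrite !inE. Qed.
Lemma cnt0r J : cnt J set0 = 0%N.
Proof. by apply/eqP; rewrite cards_eq0; apply/eqP/setP=> p; rewrite !inE andbF. Qed.

Lemma esign_sq I J : esign A I J * esign A I J = 1.
Proof. by rewrite -expr2 esignE -exprM mulnC exprM m1sq expr1n. Qed.

End Signs.


Section Ext2.
Variables (K : numFieldType) (A : comUnitAlgType K) (n : nat).
Notation ext := {ffun {set 'I_n} -> A}.
Notation es := (esign A).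
Implicit Types (I J M L : {set 'I_n}) (P Q w x y : ext).

Lemma sum_single (F : {set 'I_n} -> A) (P : pred {set 'I_n}) :
  (forall I, #|I| != 1%N -> F I = 0) ->
  \sum_(I | P I) F I = \sum_(j | P [set j]) F [set j].
Proof.
move=> hF.
rewrite (eq_bigr (fun I => \sum_(j | I == [set j]) F [set j])); last first.
  move=> I _; case: (boolP (#|I| == 1%N)) => [/cards1P [x ->] | nI].
    by rewrite (big_pred1 x) // => j; rewrite /= (inj_eq set1_inj) eq_sym.
  by rewrite hF // big1 // => j /eqP hj; move: nI; rewrite hj cards1.
rewrite (exchange_big_dep predT) //= [RHS]big_mkcond /=.
apply: eq_bigr => j _; case: (boolP (P [set j])) => Pj.
  by rewrite (big_pred1 [set j]) // => I /=; case: eqP => [->|]; rewrite ?andbF ?andbT.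
by rewrite big_pred0 // => I /=; case: eqP => [->|]; rewrite ?andbF ?andbT ?(negbTE Pj).
Qed.

Lemma homogT (Om : ext) (X : {set 'I_n}) : homog n Om -> X != setT -> Om X = 0.
Proof.
move=> hO nX; apply: hO; apply: contra nX => /eqP cX.
by rewrite eqEcard subsetT cardsT card_ord cX leqnn.
Qed.

Lemma iprodOm P (Om : ext) L : homog n Om ->
  iprod P Om L = es (~: L) L * P (~: L) * Om setT.
Proof.
move=> hO; rewrite ffunE (bigD1 (~: L)) /=; last by rewrite disjoints_subset.
rewrite setUC setUCr big1 ?addr0 // => I /andP [dIL nI].
rewrite (homogT hO) ?mulr0 //; apply: contraNneq nI => hU; apply/eqP/setP => x.
move/setP/(_ x): hU; rewrite !inE => hx.
case: (boolP (x \in L)) => xL; first by rewrite (disjointFl dIL xL).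
by move: hx; rewrite (negbTE xL) orbF.
Qed.

Lemma iprodX (X : ext) w L : homog 1 X ->
  iprod X w L = \sum_(j | j \notin L) es [set j] L * X [set j] * w (j |: L).
Proof.
move=> hX; rewrite ffunE (@sum_single (fun I => es I L * X I * w (I :|: L))).
  by apply: eq_bigl => j; rewrite disjoints1.
by move=> I hI; rewrite hX ?mulr0 ?mul0r.
Qed.

Definition w1 (c : 'I_n -> A) x : ext :=
  [ffun L : {set 'I_n} => \sum_(i in L) es [set i] (L :\ i) * c i * x (L :\ i)].

Lemma wedge1 (a : ext) x : homog 1 a -> wedge a x = w1 (fun i => a [set i]) x.
Proof.
move=> ha; apply/ffunP => L; rewrite !ffunE.
rewrite (@sum_single (fun I => \sum_(J : {set 'I_n} | [disjoint I & J] && (I :|: J == L)) es I J * a I * x J)); last first.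
  by move=> I hI; rewrite big1 // => J _; rewrite ha ?mulr0 ?mul0r.
rewrite [RHS]big_mkcond /=; apply: eq_bigr => j _.
case: (boolP (j \in L)) => jL.
  rewrite (big_pred1 (L :\ j)) // => J /=; rewrite disjoints1.
  apply/andP/eqP => [[jJ /eqP <-]|->]; first by rewrite setU1K.
  by rewrite setD1K // setD11 eqxx.
rewrite big_pred0 // => J /=; apply/negP => /andP [_ /eqP hJ].
by move: jL; rewrite -hJ setU11.
Qed.

End Ext2.


Section Ext3.
Variables (K : numFieldType) (A : comUnitAlgType K) (n : nat).
Notation ext := {ffun {set 'I_n} -> A}.
Notation es := (esign A).
Implicit Types (I J M L : {set 'I_n}) (P Q w x y a b : ext).

Lemma mscaleE f x I : mscale f x I = f * x I.
Proof. by rewrite ffunE. Qed.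
Lemma mscaleD f x y : mscale f (x + y) = mscale f x + mscale f y.
Proof. by apply/ffunP => I; rewrite !ffunE mulrDr. Qed.
Lemma mscaleDl f g x : mscale (f + g) x = mscale f x + mscale g x.
Proof. by apply/ffunP => I; rewrite !ffunE mulrDl. Qed.
Lemma mscaleN f x : mscale f (- x) = - mscale f x.
Proof. by apply/ffunP => I; rewrite !ffunE mulrN. Qed.
Lemma mscaleNl f x : mscale (- f) x = - mscale f x.
Proof. by apply/ffunP => I; rewrite !ffunE mulNr. Qed.
Lemma mscale0 f : mscale f (0 : ext) = 0.
Proof. by apply/ffunP => I; rewrite !ffunE mulr0. Qed.
Lemma mscale0l x : mscale 0 x = 0.
Proof. by apply/ffunP => I; rewrite !ffunE mul0r. Qed.
Lemma mscale1 x : mscale 1 x = x.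
Proof. by apply/ffunP => I; rewrite !ffunE mul1r. Qed.
Lemma mscaleM f g x : mscale f (mscale g x) = mscale (f * g) x.
Proof. by apply/ffunP => I; rewrite !ffunE mulrA. Qed.
Lemma mscaleB f x y : mscale f (x - y) = mscale f x - mscale f y.
Proof. by rewrite mscaleD mscaleN. Qed.

Lemma iprodDl P Q w : iprod (P + Q) w = iprod P w + iprod Q w.
Proof.
apply/ffunP => L; rewrite !ffunE -big_split /=; apply: eq_bigr => I _.
by rewrite ffunE mulrDr mulrDl.
Qed.
Lemma iprodDr P w x : iprod P (w + x) = iprod P w + iprod P x.
Proof.
apply/ffunP => L; rewrite !ffunE -big_split /=; apply: eq_bigr => I _.
by rewrite ffunE mulrDr.
Qed.
Lemma iprodSl f P w : iprod (mscale f P) w = mscale f (iprod P w).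
Proof.
apply/ffunP => L; rewrite !ffunE mulr_sumr; apply: eq_bigr => I _.
by rewrite ffunE mulrCA !mulrA.
Qed.
Lemma iprodSr f P w : iprod P (mscale f w) = mscale f (iprod P w).
Proof.
apply/ffunP => L; rewrite !ffunE mulr_sumr; apply: eq_bigr => I _.
by rewrite ffunE mulrCA !mulrA [f * _]mulrC -!mulrA.
Qed.
Lemma iprod0l w : iprod 0 w = 0.
Proof. by apply/ffunP => L; rewrite !ffunE big1 // => I _; rewrite ffunE mulr0 mul0r. Qed.
Lemma iprodNl P w : iprod (- P) w = - iprod P w.
Proof.
apply/ffunP => L; rewrite !ffunE -sumrN; apply: eq_bigr => I _.
by rewrite ffunE mulrN mulNr.
Qed.
Lemma iprodZl (k : K) P Q w : iprod (k *: P + Q) w = k *: iprod P w + iprod Q w.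
Proof.
apply/ffunP => L; rewrite !ffunE scaler_sumr -big_split /=; apply: eq_bigr => I _.
by rewrite !ffunE mulrDr mulrDl -scalerAr -scalerAl.
Qed.

Lemma wedgeSl f a b : wedge (mscale f a) b = mscale f (wedge a b).
Proof.
apply/ffunP => L; rewrite !ffunE mulr_sumr; apply: eq_bigr => I _.
rewrite mulr_sumr; apply: eq_bigr => J _.
by rewrite ffunE mulrCA !mulrA.
Qed.
Lemma wedgeSr f a b : wedge a (mscale f b) = mscale f (wedge a b).
Proof.
apply/ffunP => L; rewrite !ffunE mulr_sumr; apply: eq_bigr => I _.
rewrite mulr_sumr; apply: eq_bigr => J _.
by rewrite ffunE mulrCA.
Qed.
Lemma wedgeDr a b c : wedge a (b + c) = wedge a b + wedge a c.
Proof.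
apply/ffunP => L; rewrite !ffunE -big_split; apply: eq_bigr => I _ /=.
rewrite -big_split; apply: eq_bigr => J _ /=.
by rewrite ffunE mulrDr.
Qed.
Lemma wedgeNr a b : wedge a (- b) = - wedge a b.
Proof.
apply/ffunP => L; rewrite !ffunE -sumrN; apply: eq_bigr => I _ /=.
rewrite -sumrN; apply: eq_bigr => J _ /=.
by rewrite ffunE mulrN.
Qed.

Lemma homog_iprod j k P w : homog j P -> homog k w -> (j <= k)%N ->
  homog (k - j) (iprod P w).
Proof.
move=> hP hw jk L hL; rewrite ffunE big1 // => I dIL.
case: (boolP (#|I| == j)) => [/eqP cI | nI]; last by rewrite hP ?mulr0 ?mul0r.
rewrite hw ?mulr0 //; rewrite cardsU disjoint_setI0 // cards0 subn0 cI.
by apply: contra hL => /eqP <-; rewrite addKn.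
Qed.

Lemma homog_mscale k f x : homog k x -> homog k (mscale f x).
Proof. by move=> h I hI; rewrite ffunE h ?mulr0. Qed.

Lemma w1D c x y : w1 c (x + y) = w1 c x + w1 c y.
Proof.
apply/ffunP => L; rewrite !ffunE -big_split; apply: eq_bigr => i _ /=.
by rewrite ffunE mulrDr.
Qed.
Lemma w10 c : w1 c (0 : ext) = 0.
Proof. by apply/ffunP => L; rewrite !ffunE big1 // => i _; rewrite ffunE mulr0. Qed.

End Ext3.


Section Ext4.
Variables (K : numFieldType) (A : comUnitAlgType K) (n : nat).
Notation ext := {ffun {set 'I_n} -> A}.
Notation es := (esign A).
Implicit Types (I J M L : {set 'I_n}) (P Q w x y a b : ext).

Lemma negsgn (k : nat) : - ((-1 : A) ^+ k) = (-1) ^+ k.+1.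
Proof. by rewrite exprS mulN1r. Qed.

Lemma sign1 (i j : 'I_n) M : i != j -> i \notin M -> j \notin M ->
  es [set i] (j |: M) * es [set j] M = - (es [set j] (i |: M) * es [set i] M).
Proof.
move=> ij iM jM; rewrite !esignE -!exprD negsgn; apply: sgn_mod2.
rewrite !cntUr ?disjoints1 //; have := cnt11 ij; lia.
Qed.

Lemma setDDC L (i j : 'I_n) : L :\ i :\ j = L :\ j :\ i.
Proof. by rewrite !setDDl setUC. Qed.

Lemma sign1L (i j : 'I_n) L : i \in L -> j \in L -> i != j ->
  es [set i] (L :\ i) * es [set j] (L :\ i :\ j) =
  - (es [set j] (L :\ j) * es [set i] (L :\ j :\ i)).
Proof.
move=> iL jL ij; set M := L :\ i :\ j.
have e1 : L :\ i = j |: M by rewrite /M setD1K // in_setD1 eq_sym ij.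
have e2 : L :\ j = i |: M by rewrite /M setDDC setD1K // in_setD1 ij.
rewrite [L :\ j :\ i]setDDC -/M e1 e2; apply: sign1 => //.
  by rewrite /M !in_setD1 eqxx andbF.
by rewrite /M setDDC !in_setD1 eqxx andbF.
Qed.

Lemma w1_anti (a c : 'I_n -> A) x : w1 a (w1 c x) = - w1 c (w1 a x).
Proof.
apply/ffunP => L; rewrite !ffunE -sumrN.
under eq_bigr => i _ do rewrite ffunE mulr_sumr.
under [RHS]eq_bigr => j _ do rewrite ffunE mulr_sumr -sumrN.
rewrite [RHS](exchange_big_dep (fun i => i \in L)) /=; last first.
  by move=> j i _; rewrite in_setD1 => /andP [].
apply: eq_bigr => i iL; rewrite [RHS](eq_bigl (fun j => j \in L :\ i)); last first.
  by move=> j; rewrite !in_setD1 iL andbT andbC eq_sym.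
apply: eq_bigr => j; rewrite in_setD1 => /andP [ji jL].
rewrite [L :\ j :\ i]setDDC.
have ij : i != j by rewrite eq_sym.
have h := sign1L iL jL ij.
transitivity ((es [set i] (L :\ i) * es [set j] (L :\ i :\ j)) * (a i * c j * x (L :\ i :\ j))).
  ring.
rewrite h [L :\ j :\ i]setDDC; ring.
Qed.

End Ext4.


Section Ext5.
Variables (K : numFieldType) (A : comUnitAlgType K) (n : nat).
Variable D : 'I_n -> A -> A.
Hypothesis hD : coord_derivations D.
Notation ext := {ffun {set 'I_n} -> A}.
Notation es := (esign A).
Implicit Types (I J M L : {set 'I_n}) (P Q w x y a b : ext).

Lemma DD i (u v : A) : D i (u + v) = D i u + D i v.
Proof. by case: hD => h _ _; have := h i 1 u v; rewrite !scale1r. Qed.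
Lemma D0 i : D i 0 = 0.
Proof. by apply/(addrI (D i 0)); rewrite -DD !addr0. Qed.
Lemma DN i (u : A) : D i (- u) = - D i u.
Proof.
case: hD => h _ _; rewrite -[- u]addr0 -scaleN1r h D0 addr0.
by rewrite scaleN1r.
Qed.
Lemma DM i (u v : A) : D i (u * v) = D i u * v + u * D i v.
Proof. by case: hD. Qed.
Lemma Dsum i (T : Type) (r : seq T) (Pr : pred T) (F : T -> A) :
  D i (\sum_(k <- r | Pr k) F k) = \sum_(k <- r | Pr k) D i (F k).
Proof. exact: (big_morph (D i) (DD i) (D0 i)). Qed.
Lemma Dsign i (m : nat) (u : A) : D i ((-1) ^+ m * u) = (-1) ^+ m * D i u.
Proof.
elim: m => [|m IH]; first by rewrite !expr0 !mul1r.
by rewrite !exprS !mulN1r !mulNr DN IH.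
Qed.
Lemma Des i I J (u : A) : D i (es I J * u) = es I J * D i u.
Proof. exact: Dsign. Qed.

Lemma mscale_sum (u : A) (T : Type) (r : seq T) (Pr : pred T) (F : T -> ext) :
  mscale u (\sum_(k <- r | Pr k) F k) = \sum_(k <- r | Pr k) mscale u (F k).
Proof. apply/ffunP => L; rewrite ffunE !sum_ffunE mulr_sumr; apply: eq_bigr => k _; by rewrite ffunE. Qed.

Lemma dext_scale (u : A) x :
  dext D (mscale u x) = mscale u (dext D x) + w1 (fun i => D i u) x.
Proof.
apply/ffunP => L; rewrite !ffunE mulr_sumr -big_split /=; apply: eq_bigr => i _.
by rewrite ffunE DM; ring.
Qed.

Definition Xder (X : ext) (u : A) := \sum_(j : 'I_n) X [set j] * D j u.

Lemma lie_mv_scale (X : ext) (u : A) Lam :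
  lie_mv D X (mscale u Lam) = mscale u (lie_mv D X Lam) + mscale (Xder X u) Lam.
Proof.
rewrite /lie_mv mscaleB.
have -> : \sum_(I : {set 'I_n}) \sum_(i in I) \sum_(j : 'I_n)
        mscale (mscale u Lam I * D i (X [set j]) * es [set i] (I :\ i))
               (wedge (ebase A [set j]) (ebase A (I :\ i))) =
     mscale u (\sum_(I : {set 'I_n}) \sum_(i in I) \sum_(j : 'I_n)
        mscale (Lam I * D i (X [set j]) * es [set i] (I :\ i))
               (wedge (ebase A [set j]) (ebase A (I :\ i)))).
  rewrite mscale_sum; apply: eq_bigr => I _; rewrite mscale_sum; apply: eq_bigr => i _.
  rewrite mscale_sum; apply: eq_bigr => j _.
  by rewrite mscaleM mscaleE !mulrA.
set S := mscale u (\sum_(I : {set 'I_n}) _).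
rewrite addrAC; congr (_ - _).
apply/ffunP => L; rewrite !ffunE /Xder mulr_sumr mulr_suml -big_split /=.
apply: eq_bigr => j _; rewrite DM; ring.
Qed.

End Ext5.


Section Ext6.
Variables (K : numFieldType) (A : comUnitAlgType K) (n : nat).
Variable D : 'I_n -> A -> A.
Hypothesis hD : coord_derivations D.
Notation ext := {ffun {set 'I_n} -> A}.
Notation es := (esign A).
Implicit Types (I J M L : {set 'I_n}) (P Q w x y a b : ext).

Lemma signX (i j : 'I_n) L' M' : i != j -> i \notin L' -> j \notin L' ->
  i \notin M' -> j \notin M' -> [disjoint M' & L'] ->
  es [set i] L' * es [set j] L' * es (i |: M') (j |: L') =
  - (es (j |: M') (i |: L') * es [set i] M' * es [set j] M').
Proof.
move=> ij iL jL iM jM dML; rewrite !esignE -!exprD negsgn; apply: sgn_mod2.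
rewrite !cntUl ?disjoints1 // !cntUr ?disjoints1 //.
have d1 : [disjoint [set i] & M'] by rewrite disjoints1.
have d2 : [disjoint [set j] & M'] by rewrite disjoints1.
have := cnt11 ij; have := cntswap d1; have := cntswap d2.
rewrite !cards1 !mul1n; lia.
Qed.

Lemma ebase1 (j : 'I_n) : homog 1 (ebase A [set j]).
Proof.
move=> I hI; rewrite /ebase ffunE; case: eqP => // eI.
by move: hI; rewrite eI cards1.
Qed.

Lemma wedge_ebase (j : 'I_n) J M :
  wedge (ebase A [set j]) (ebase A J) M =
  if (j \in M) && (M :\ j == J) then es [set j] (M :\ j) else 0.
Proof.
rewrite wedge1; last exact: ebase1. rewrite /w1 ffunE.
case: (boolP (j \in M)) => jM /=.
  rewrite (bigD1 j) //= big1 ?addr0.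
    by rewrite /ebase !ffunE eqxx mulr1; case: eqP => _; rewrite ?mulr1 ?mulr0.
  move=> i /andP [_ ij]; rewrite /ebase !ffunE.
  by rewrite (inj_eq set1_inj) (negbTE ij) mulr0 mul0r.
rewrite big1 // => i iM; rewrite /ebase !ffunE (inj_eq set1_inj).
by case: eqP => [eij|]; [move: jM; rewrite -eij iM | rewrite mulr0 mul0r].
Qed.

End Ext6.

Section K1.
Variables (K : numFieldType) (A : comUnitAlgType K) (n : nat).
Variable D : 'I_n -> A -> A.
Notation ext := {ffun {set 'I_n} -> A}.
Notation es := (esign A).

Lemma inner_I (X Lam : ext) (M : {set 'I_n}) (i j : 'I_n) :
  \sum_(I : {set 'I_n} | i \in I)
     (Lam I * D i (X [set j]) * es [set i] (I :\ i) *
      (if (j \in M) && (M :\ j == I :\ i) then es [set j] (M :\ j) else 0)) =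
  if (j \in M) && (i \notin M :\ j) then
    Lam (i |: (M :\ j)) * D i (X [set j]) * es [set i] (M :\ j) * es [set j] (M :\ j)
  else 0.
Proof.
case: (boolP (j \in M)) => jM /=; last by rewrite big1 // => I _; rewrite mulr0.
case: (boolP (i \in M :\ j)) => iM /=.
  rewrite big1 // => I iI; case: eqP => [eI|]; last by rewrite mulr0.
  by move: iM; rewrite eI in_setD1 eqxx.
rewrite (bigD1 (i |: (M :\ j))) ?setU11 //= setU1K // eqxx big1 ?addr0 //.
move=> I /andP [iI nI]; case: eqP => [eI|]; last by rewrite mulr0.
by move: nI; rewrite eI setD1K // eqxx.
Qed.

Lemma lie_mv_val (X Lam : ext) (M : {set 'I_n}) :
  lie_mv D X Lam M = \sum_(j < n) X [set j] * D j (Lam M)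
   - (\sum_(j in M) Lam M * D j (X [set j])
      + \sum_(j in M) \sum_(i | i \notin M)
          Lam (i |: (M :\ j)) * D i (X [set j]) * es [set i] (M :\ j) * es [set j] (M :\ j)).
Proof.
rewrite /lie_mv !ffunE; congr (_ - _).
rewrite !sum_ffunE.
under eq_bigr => I _ do rewrite !sum_ffunE.
under eq_bigr => I _ do under eq_bigr => i _ do rewrite sum_ffunE.
under eq_bigr => I _ do under eq_bigr => i _ do under eq_bigr => j _ do rewrite mscaleE wedge_ebase.
rewrite (exchange_big_dep predT) //=.
under eq_bigr => i _ do rewrite exchange_big /=.
rewrite exchange_big /=.
under eq_bigr => j _ do under eq_bigr => i _ do rewrite inner_I.
rewrite -big_split /= [RHS]big_mkcond /=.
apply: eq_bigr => j _; case: (boolP (j \in M)) => jM /=; last by rewrite big1.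
rewrite -big_mkcond (bigD1 j) /=; last by rewrite in_setD1 eqxx.
rewrite setD1K // -mulrA esign_sq mulr1; congr (_ + _).
apply: eq_bigl => i; rewrite in_setD1 negb_and negbK.
by case: eqP => [->|]; rewrite ?jM /= ?andbT ?andbF.
Qed.
End K1.

Section K2.
Variables (K : numFieldType) (A : comUnitAlgType K) (n : nat).
Variable D : 'I_n -> A -> A.
Hypothesis hD : coord_derivations D.
Notation ext := {ffun {set 'I_n} -> A}.
Notation es := (esign A).

Lemma sign2 (i j : 'I_n) (M : {set 'I_n}) : i != j -> i \notin M -> j \notin M ->
  es [set j] (i |: M) * es [set i] (j |: M) = - (es [set i] M * es [set j] M).
Proof.
move=> ij iM jM; rewrite !esignE -!exprD negsgn; apply: sgn_mod2.
rewrite !cntUr ?disjoints1 //; have := cnt11 ij; lia.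
Qed.

Lemma K2 (X w : ext) (L : {set 'I_n}) : homog 1 X ->
  iprod X (dext D w) L = \sum_(j | j \notin L) X [set j] * D j (w L)
   + \sum_(j | j \notin L) \sum_(i in L)
       es [set j] L * es [set i] ((j |: L) :\ i) * X [set j] * D i (w ((j |: L) :\ i)).
Proof.
move=> hX; rewrite iprodX // -big_split /=; apply: eq_bigr => j jL.
rewrite ffunE big_setU1 //= setU1K // mulrDr mulr_sumr; congr (_ + _).
  by rewrite -[RHS]mul1r -(esign_sq A [set j] L); ring.
by apply: eq_bigr => i _; ring.
Qed.

Lemma K3 (X w : ext) (L : {set 'I_n}) : homog 1 X ->
  dext D (iprod X w) L =
    \sum_(i in L) (D i (X [set i]) * w L + X [set i] * D i (w L))
  + \sum_(i in L) \sum_(j | j \notin L)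
       es [set i] (L :\ i) * es [set j] (L :\ i) * D i (X [set j]) * w (j |: (L :\ i))
  + \sum_(i in L) \sum_(j | j \notin L)
       es [set i] (L :\ i) * es [set j] (L :\ i) * X [set j] * D i (w (j |: (L :\ i))).
Proof.
move=> hX; rewrite ffunE -!big_split /=; apply: eq_bigr => i iL.
rewrite iprodX // (bigD1 i) /=; last by rewrite in_setD1 eqxx.
rewrite setD1K // (eq_bigl (fun j => j \notin L)); last first.
  by move=> j; rewrite in_setD1 negb_and negbK; case: eqP => [->|]; rewrite ?iL /= ?andbT ?andbF.
rewrite (DD hD) (Dsum hD) mulrDr mulr_sumr -addrA; congr (_ + _).
  by rewrite -mulrA (Des hD) !(DM hD) mulrA esign_sq mul1r.
rewrite -big_split /=; apply: eq_bigr => j _.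
rewrite -mulrA (Des hD) !(DM hD); ring.
Qed.

Lemma K4 (X w : ext) (L : {set 'I_n}) :
  \sum_(j | j \notin L) \sum_(i in L)
       es [set j] L * es [set i] ((j |: L) :\ i) * X [set j] * D i (w ((j |: L) :\ i))
  + \sum_(i in L) \sum_(j | j \notin L)
       es [set i] (L :\ i) * es [set j] (L :\ i) * X [set j] * D i (w (j |: (L :\ i))) = 0.
Proof.
rewrite exchange_big /= -big_split /= big1 // => i iL.
rewrite -big_split /= big1 // => j jL.
have ij : i != j by apply: contraNneq jL => <-.
have e1 : (j |: L) :\ i = j |: (L :\ i).
  by apply/setP => k; rewrite !inE; case: eqP => [->|]; rewrite ?(negbTE ij) ?andbT.
have e2 : L = i |: (L :\ i) by rewrite setD1K.
rewrite e1 {1}e2.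
have := sign2 ij (_ : i \notin L :\ i) (_ : j \notin L :\ i).
rewrite in_setD1 eqxx in_setD1 (negbTE jL) andbF => /(_ isT isT) h.
rewrite h; ring.
Qed.

End K2.

Section Key.
Variables (K : numFieldType) (A : comUnitAlgType K) (n : nat).
Variable D : 'I_n -> A -> A.
Hypothesis hD : coord_derivations D.
Notation ext := {ffun {set 'I_n} -> A}.
Notation es := (esign A).

Lemma push2 (T1 T2 : finType) (P1 : pred T1) (P2 : pred T2) (F : T1 -> T2 -> A) (s h : A) :
  - (s * (\sum_(j | P1 j) \sum_(i | P2 i) F j i) * h) =
  \sum_(j | P1 j) \sum_(i | P2 i) - (s * F j i * h).
Proof.
rewrite mulr_sumr mulr_suml -sumrN; apply: eq_bigr => j _.
by rewrite mulr_sumr mulr_suml -sumrN.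
Qed.

Lemma K5 (X Lam Om : ext) (L : {set 'I_n}) : homog n Om ->
  \sum_(i in L) \sum_(j | j \notin L)
       es [set i] (L :\ i) * es [set j] (L :\ i) * D i (X [set j]) * iprod Lam Om (j |: (L :\ i))
  = - (es (~: L) L *
      (\sum_(j in ~: L) \sum_(i | i \notin ~: L)
          Lam (i |: (~: L :\ j)) * D i (X [set j]) * es [set i] (~: L :\ j) * es [set j] (~: L :\ j))
      * Om setT).
Proof.
move=> hO.
rewrite push2 [RHS]exchange_big /=.
rewrite [RHS](eq_bigl (fun i => i \in L)); last by move=> i; rewrite in_setC negbK.
apply: eq_bigr => i iL.
rewrite [RHS](eq_bigl (fun j => j \notin L)); last by move=> j; rewrite in_setC.
apply: eq_bigr => j jL.
rewrite iprodOm //.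
have ij : i != j by apply: contraNneq jL => <-.
have eC : ~: (j |: (L :\ i)) = i |: (~: L :\ j).
  apply/setP => k; rewrite !inE.
  case: (eqVneq k i) => [->|ki]; first by rewrite iL (negbTE ij).
  by case: (eqVneq k j) => [->|kj] //=; rewrite ?jL ?andbT.
rewrite eC.
have dML : [disjoint ~: L :\ j & L :\ i].
  rewrite disjoints_subset; apply/subsetP => k; rewrite !inE.
  by case/andP => _ kL; rewrite negb_and kL orbT.
have := @signX K A n i j (L :\ i) (~: L :\ j) ij.
rewrite !in_setD1 !eqxx (negbTE jL) !andbF in_setC iL /= !andbF.
move=> /(_ isT isT isT isT dML).
rewrite !setD1K ?in_setC // => h.
transitivity ((es [set i] (L :\ i) * es [set j] (L :\ i) * es (i |: ~: L :\ j) (j |: L :\ i))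
   * (D i (X [set j]) * Lam (i |: ~: L :\ j) * Om [set: 'I_n])); first by ring.
rewrite h; ring.
Qed.


End Key.

Section Key2.
Variables (K : numFieldType) (A : comUnitAlgType K) (n : nat).
Variable D : 'I_n -> A -> A.
Hypothesis hD : coord_derivations D.
Notation ext := {ffun {set 'I_n} -> A}.
Notation es := (esign A).

Definition dv (X Om : ext) : A :=
  (Om setT)^-1 * Xder D X (Om setT) + \sum_(j < n) D j (X [set j]).

Lemma key (X Lam Om : ext) : homog 1 X -> homog n Om -> Om setT \is a GRing.unit ->
  iprod (lie_mv D X Lam) Om + mscale (dv X Om) (iprod Lam Om) = lie_form D X (iprod Lam Om).
Proof.
move=> hX hO hu; apply/ffunP => L.
rewrite /lie_form [LHS]ffunE [RHS]ffunE K2 // K3 //.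
have eR : forall a q b p q' : A, a + q + (b + p + q') = a + b + p + (q + q').
  by move=> *; ring.
rewrite eR K4 addr0 (@K5 _ _ _ D X Lam Om L hO) mscaleE !iprodOm // lie_mv_val.
set s := es (~: L) L; set lm := Lam (~: L).
have Ds : forall j (u : A), D j (s * u) = s * D j u by move=> j u; exact: (Des hD).
rewrite /dv; move: hu; set h := Om setT => hu.
set C := \sum_(j in ~: L) _.
clearbody s lm h C.
rewrite big_split /= addrA.
have eXD : forall F : 'I_n -> A,
    \sum_(j | j \notin L) F j + \sum_(i in L) F i = \sum_(j < n) F j.
  by move=> F; rewrite [RHS](bigID (fun j => j \in L)) /= addrC.
rewrite -addrA [_ + \sum_(i in L) X [set i] * _]addrC addrA eXD.
have eS1 : \sum_(j < n) X [set j] * D j (s * lm * h) =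
    s * (h * \sum_(j < n) X [set j] * D j lm + lm * Xder D X h).
  rewrite /Xder !mulr_sumr -big_split /= mulr_sumr; apply: eq_bigr => j _.
  by rewrite -mulrA Ds (DM hD); ring.
have eSD : \sum_(j < n) D j (X [set j]) =
    \sum_(j in L) D j (X [set j]) + \sum_(j in ~: L) D j (X [set j]).
  rewrite (bigID (fun j => j \in L)) /=; congr (_ + _).
  by apply: eq_bigl => j; rewrite in_setC.
have ehi : h^-1 * Xder D X h * (s * lm * h) = s * lm * Xder D X h.
  by rewrite -[RHS]mulr1 -(mulVr hu); ring.
rewrite eS1 eSD mulrDl ehi -mulr_sumr -mulr_suml; ring.
Qed.
End Key2.


Section Final.
Variables (K : numFieldType) (A : comUnitAlgType K) (n : nat).
Variable D : 'I_n -> A -> A.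
Hypothesis hD : coord_derivations D.
Notation ext := {ffun {set 'I_n} -> A}.
Notation es := (esign A).

Lemma unit_ring (u w a b c : A) : w * u = 1 -> a - b = (w * u - 1) * c -> a = b.
Proof. by move=> wu e; apply/eqP; rewrite -subr_eq0 e wu subrr mul0r. Qed.

Lemma es_cancel (I J : {set 'I_n}) (a b : A) : es I J * a = es I J * b -> a = b.
Proof.
move=> e; rewrite -[a]mul1r -[b]mul1r -(esign_sq A I J) -!mulrA e //.
Qed.

Lemma iprodOm_inj (Om x y : ext) : homog n Om -> Om setT \is a GRing.unit ->
  iprod x Om = iprod y Om -> x = y.
Proof.
move=> hO hu e; apply/ffunP => I.
have := congr1 (fun f : ext => f (~: I)) e; rewrite /= !iprodOm // setCK => e'.
have e2 : x I * Om setT = y I * Om setT by apply: (@es_cancel I (~: I)); rewrite !mulrA.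
by rewrite -[x I]mulr1 -[y I]mulr1 -(mulrV hu) !mulrA e2.
Qed.

Lemma dext0 : dext D (0 : ext) = 0.
Proof.
apply/ffunP => L; rewrite !ffunE big1 // => i _; rewrite ffunE (D0 hD) mulr0 //.
Qed.

Lemma lie_form0 (w : ext) : lie_form D 0 w = 0.
Proof. by rewrite /lie_form !iprod0l dext0 addr0. Qed.

Lemma lie_mv0 (P : ext) : lie_mv D 0 P = 0.
Proof.
rewrite /lie_mv; apply/ffunP => L; rewrite !ffunE.
rewrite big1 ?sum_ffunE ?big1 ?subrr // => [I _|j _]; last by rewrite ffunE mul0r.
rewrite sum_ffunE big1 // => i _; rewrite sum_ffunE big1 // => j _.
by rewrite ffunE ffunE (D0 hD) mulr0 mul0r mul0r.
Qed.

Lemma homog0 k : homog k (0 : ext).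
Proof. by move=> I _; rewrite ffunE. Qed.

Lemma Zform_scale p (w eta : ext) (v : A) : homog p w ->
  Zform D p w eta -> Zform D p (mscale v w) (mscale v eta).
Proof.
move=> hw [he hP]; split; first exact: homog_mscale.
move=> P pP; have [c1 c2] := hP P pP.
case: pP => p0 hPp.
have ha : homog 1 (iprod P w).
  by have := homog_iprod hPp hw (leq_pred p); rewrite -subn1 subKn.
have hb : homog 1 (iprod P eta).
  by have := homog_iprod hPp he (leq_pred p); rewrite -subn1 subKn.
rewrite !iprodSr !wedgeSl !wedgeSr !mscaleM -mscaleD c1 mscale0; split => //.
rewrite !(dext_scale hD) !wedgeDr !wedgeSr !(wedge1 _ ha) !(wedge1 _ hb).
rewrite (w1_anti (fun i => iprod P w [set i])) (w1_anti (fun i => iprod P eta [set i])).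
move: c1 c2; rewrite !(wedge1 _ ha) !(wedge1 _ hb) => c1 c2.
rewrite -mscaleD addrACA -mscaleD c2 mscale0 add0r.
by rewrite -opprD -w1D c1 w10 oppr0 mscale0.
Qed.

Lemma Zmv_scale q (Om Lam Pi : ext) (v : A) : homog q Lam -> homog n Om -> (q <= n)%N ->
  Zmv D q Om Lam Pi -> Zmv D q Om (mscale v Lam) (mscale v Pi).
Proof.
move=> hL hO qn [hP hz]; split; first exact: homog_mscale.
rewrite !iprodSl; apply: Zform_scale => //; exact: homog_iprod hL hO qn.
Qed.

Lemma addE (f g : ext) I : (f + g) I = f I + g I.
Proof. by rewrite ffunE. Qed.

Lemma unit_ring2 (u w a b c d e : A) : w * u = 1 -> d = e ->
  a - b = (w * u - 1) * c + w * (d - e) -> a = b.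
Proof. by move=> wu de h; apply/eqP; rewrite -subr_eq0 h wu de !subrr mul0r mulr0 addr0. Qed.

End Final.

Unset Implicit Arguments.
Set Strict Implicit.

Theorem lemma3p1 (K : numFieldType) (A : comUnitAlgType K) (n q : nat)
    (D : 'I_n -> A -> A) (Lam Om : {ffun {set 'I_n} -> A}) (u : A) :
  coord_derivations D ->
  (q <= n)%N ->
  nambu D q Lam ->
  volume_form Om ->
  u \is a GRing.unit ->
  let om := iprod Lam Om in
  subquot_iso (Zmv D q Om Lam) (Bmv D Lam) (Zform D (n - q) om) (Bform D om) /\
  subquot_iso (Zmv D q Om Lam) (Bmv D Lam)
              (Zmv D q Om (mscale u Lam)) (Bmv D (mscale u Lam)).
Proof.
move=> hD qn [hL _] [hO hu] uu om.
have abc : forall a b c : {ffun {set 'I_n} -> A}, a + b = (a + c) + (b - c).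
  by move=> a b c; rewrite addrACA subrr addr0.
split.
- exists (fun P => iprod P Om); split.
  + by move=> k x y; exact: iprodZl.
  + by move=> x [].
  + move=> y [hy hz].
    pose x : {ffun {set 'I_n} -> A} :=
      [ffun I => esign A I (~: I) * y (~: I) * (Om setT)^-1].
    have fx : iprod x Om = y.
      apply/ffunP => L; rewrite iprodOm // ffunE setCK.
      transitivity ((esign A (~: L) L * esign A (~: L) L) * y L * ((Om setT)^-1 * Om setT)).
        by ring.
      by rewrite esign_sq mulVr // mul1r mulr1.
    exists x.
      split; last by rewrite fx.
      move=> I hI; rewrite ffunE hy ?mulr0 ?mul0r //.
      have := cardsC I; rewrite card_ord; lia.
    rewrite fx subrr; exists 0, 0; split; first exact: homog0.
    by rewrite lie_form0 // mscale0l addr0.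
  + move=> x _; split.
    * case=> X [f [hX e]]; exists X, (dv D X Om + f); split => //.
      apply: (iprodOm_inj hO hu).
      by rewrite e iprodDl iprodSl mscaleDl addrA (key hD Lam hX hO hu).
    * case=> X [g [hX e]]; exists X, (g - dv D X Om); split => //.
      rewrite e iprodDl iprodSl -(key hD Lam hX hO hu) mscaleDl mscaleNl.
      exact: abc.
- exists (mscale u); split.
  + by move=> k x y; apply/ffunP => I; rewrite !ffunE mulrDr scalerAr.
  + by move=> x hx; exact: Zmv_scale.
  + move=> y hy; exists (mscale u^-1 y).
      have := @Zmv_scale K A n D hD q Om (mscale u Lam) y u^-1 (homog_mscale u hL) hO qn hy.
      by rewrite mscaleM mulVr // mscale1.
    rewrite mscaleM mulrV // mscale1 subrr; exists 0, 0; split; first exact: homog0.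
    by rewrite lie_mv0 // mscale0l addr0.
  + move=> x _; split.
    * case=> X [g [hX e]]; exists X, (u^-1 * Xder D X u + g); split => //.
      move: e; rewrite (lie_mv_scale hD); move: (lie_mv D X Lam) => lm e.
      apply/ffunP => I; have := congr1 (fun f : {ffun {set 'I_n} -> A} => f I) e.
      rewrite /= !addE !mscaleE => e'.
      apply: (unit_ring2 (u := u) (w := u^-1) (mulVr uu) e'
               (c := lm I + g * Lam I - x I)).
      ring.
    * case=> X [g [hX e]]; exists X, (g - u^-1 * Xder D X u); split => //.
      rewrite e (lie_mv_scale hD); move: (lie_mv D X Lam) => lm.
      apply/ffunP => I; rewrite !addE !mscaleE addE mscaleE.
      apply: (unit_ring2 (u := u) (w := u^-1) (mulVr uu) (erefl (0 : A))
               (c := Xder D X u * Lam I)).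
      ring.
Qed.
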